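(* Let $p\ge3$ be a prime, $P$ cyclic of order $p$, and $K\le\mathrm{Aut}(P)$. For $i,j\in\{1,2,3\}$ with $i\ne j$ such that $|\sigma_i|$ and $|\sigma_j|$ divide $|K|$, the $S$-rings $\mathcal{A}_i(K)$ and $\mathcal{A}_j(K)$ are not algebraically isomorphic.
   Context: $E_1=\langle a\rangle\times\langle b\rangle$ with $|a|=|b|=2$, $E_2=\langle c\rangle$ with $|c|=4$. $\sigma_1\in\mathrm{Aut}(E_1)$: $a\mapsto b$, $b\mapsto ab$ (order 3); $\sigma_2\in\mathrm{Aut}(E_1)$: $a\mapsto b$, $b\mapsto a$ (order 2); $\sigma_3\in\mathrm{Aut}(E_2)$: $c\mapsto c^{-1}$ (order 2). Let $E=E_1$ for $i=1,2$ and $E=E_2$ for $i=3$, $G=E\times P$. For $K\le\mathrm{Aut}(P)$ with $|\sigma_i|$ dividing $|K|$: fix a generator $\theta$ of $K$, let $M\le K$ have index $|\sigma_i|$, let $\psi:\langle\sigma_i\rangle\to K/M$, $\sigma_i^k\mapsto M\theta^k$, and $A(\langle\sigma_i\rangle,K,\psi)=\{(x,y)\in\langle\sigma_i\rangle\times K:x^\psi=yM\}\le\mathrm{Aut}(E)\times\mathrm{Aut}(P)\le\mathrm{Aut}(G)$. Then $\mathcal{A}_i(K)=\mathrm{Cyc}(A(\langle\sigma_i\rangle,K,\psi),G)$, where for $A\le\mathrm{Aut}(G)$, $\mathrm{Cyc}(A,G)$ is the $S$-ring over $G$ whose basic sets are the $A$-orbits on $G$. An $S$-ring over $G$ is a subring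 of $\mathbb{Z}G$ spanned by $\underline{X}=\sum_{x\in X}x$ over a partition $\mathcal{S}$ (basic sets) of $G$ containing $\{e\}$ and closed under inversion; structure constants $c^Z_{X,Y}$ count pairs $(x,y)\in X\times Y$ with $xy=z$ for fixed $z\in Z$. An algebraic isomorphism is a bijection between the sets of basic sets preserving all structure constants. *)

(* Defs.v *)
From mathcomp Require Import all_boot all_order all_algebra all_fingroup all_solvable.
Set Implicit Arguments. Unset Strict Implicit. Unset Printing Implicit Defensive.

Local Open Scope group_scope.

(* E1 = Z/2 x Z/2 (a = (1,0), b = (0,1), group law = componentwise addition),
   E2 = Z/4 (c = 1).  P = Z/p (the cyclic group of order p).              *)
Definition E1 : finGroupType := ('Z_2 * 'Z_2)%type.
Definition E2 : finGroupType := 'Z_4.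

(* sigma_1 : a |-> b, b |-> ab, i.e. a^u b^v |-> b^u (ab)^v = a^v b^(u+v). *)
Definition sig1_fun (x : E1) : E1 := (x.2, x.1 * x.2).
Lemma sig1_inj : injective sig1_fun.
Proof.
apply: (can_inj (g := fun x : E1 => (x.2 * x.1^-1, x.1))).
by case=> u v; rewrite /sig1_fun /= mulgK.
Qed.
Definition sigma1 : {perm E1} := perm sig1_inj.

Definition sig2_fun (x : E1) : E1 := (x.2, x.1).
Lemma sig2_inj : injective sig2_fun.
Proof. by apply: (can_inj (g := sig2_fun)); case. Qed.
Definition sigma2 : {perm E1} := perm sig2_inj.

Definition sig3_fun (x : E2) : E2 := x^-1.
Lemma sig3_inj : injective sig3_fun.
Proof. exact: invg_inj. Qed.
Definition sigma3 : {perm E2} := perm sig3_inj.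

(* psi : <sigma> -> K/M, sigma^k |-> M theta^k.  The pair (x, y) lies in A iff
   x = sigma^k for some k and y M = M theta^k, i.e. y \in M theta^k.         *)
Definition Agrp (E P : finGroupType) (sigma : {perm E}) (K : {set {perm P}})
    (theta : {perm P}) (M : {set {perm P}}) : {set {perm E} * {perm P}} :=
  [set xy | [exists k : 'I_#[sigma],
      [&& xy.1 == sigma ^+ k, xy.2 \in K & xy.2 \in M :* (theta ^+ k)]]].

Definition cyc_sets (E P : finGroupType) (A : {set {perm E} * {perm P}})
    : {set {set (E * P)%type}} :=
  [set [set ((xy.1 g.1, xy.2 g.2) : (E * P)%type) | xy : {perm E} * {perm P} in A]
     | g : (E * P)%type in [set: (E * P)%type]].

(* c^Z_{X,Y} = #{(x,y) in X x Y : x y = z} for a fixed z in Z (z = repr Z). *)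
Definition struct_const (gT : finGroupType) (X Y Z : {set gT}) : nat :=
  #|[set u in setX X Y | u.1 * u.2 == repr Z]|.

Definition alg_iso (gT1 gT2 : finGroupType)
    (S1 : {set {set gT1}}) (S2 : {set {set gT2}}) : Prop :=
  exists f : {set gT1} -> {set gT2},
    [/\ {in S1 &, injective f}, f @: S1 = S2 &
        forall X Y Z, X \in S1 -> Y \in S1 -> Z \in S1 ->
          struct_const X Y Z = struct_const (f X) (f Y) (f Z)].

Record Sring := MkSring { sr_group : finGroupType; sr_basic : {set {set sr_group}} }.

Definition alg_iso_sr (S1 S2 : Sring) : Prop := alg_iso (sr_basic S1) (sr_basic S2).

Definition sigma_order (i : nat) : nat :=
  match i with 1 => #[sigma1] | 2 => #[sigma2] | _ => #[sigma3] end.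

Definition calA (p i : nat) (K : {set {perm 'Z_p}}) (theta : {perm 'Z_p})
    (M : {set {perm 'Z_p}}) : Sring :=
  match i with
  | 1 => @MkSring (E1 * 'Z_p)%type (cyc_sets (Agrp sigma1 K theta M))
  | 2 => @MkSring (E1 * 'Z_p)%type (cyc_sets (Agrp sigma2 K theta M))
  | _ => @MkSring (E2 * 'Z_p)%type (cyc_sets (Agrp sigma3 K theta M))
  end.

(* Main.v *)
Require Import Defs.
From mathcomp Require Import all_boot all_order all_algebra all_fingroup all_solvable.
Set Implicit Arguments. Unset Strict Implicit. Unset Printing Implicit Defensive.
Local Open Scope group_scope.

Definition good (gT : finGroupType) (S : {set {set gT}}) :=
  [/\ [set 1] \in S, forall X, X \in S -> repr X \in X &
      forall X, X \in S -> 1 \in X -> X = [set 1]].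

Definition thin (gT : finGroupType) (S : {set {set gT}}) :=
  exists2 X, X \in S & X != [set 1] /\ struct_const X X [set 1] = 1%N.

Definition allsym (gT : finGroupType) (S : {set {set gT}}) :=
  forall X, X \in S -> struct_const X X [set 1] != 0%N.

Lemma sc_1YY (gT : finGroupType) (Y : {set gT}) :
  repr Y \in Y -> struct_const [set 1] Y Y != 0%N.
Proof.
move=> hY; rewrite /struct_const cards_eq0; apply/set0Pn.
exists (1, repr Y); by rewrite inE in_setX set11 hY /= mul1g eqxx.
Qed.

Lemma sc_X11 (gT : finGroupType) (X : {set gT}) :
  struct_const X [set 1] [set 1] != 0%N -> 1 \in X.
Proof.
rewrite /struct_const cards_eq0 => /set0Pn [[u v]].
rewrite inE in_setX /= repr_set1 => /andP [/andP [hu /set1P ->]].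
by rewrite mulg1 => /eqP <-.
Qed.

Lemma transfer (gT1 gT2 : finGroupType) (S1 : {set {set gT1}}) (S2 : {set {set gT2}}) :
  good S1 -> good S2 -> alg_iso S1 S2 ->
  (thin S1 <-> thin S2) /\ (allsym S1 <-> allsym S2).
Proof.
case=> [e1 r1 u1] [e2 r2 u2] [f [finj fim fsc]].
have fS : forall X, X \in S1 -> f X \in S2.
  by move=> X hX; rewrite -fim; apply: imset_f.
have fsurj : forall Y, Y \in S2 -> exists2 X, X \in S1 & Y = f X.
  by move=> Y; rewrite -fim => /imsetP.
have f1 : f [set 1] = [set 1].
  have [Y hY hYe] := fsurj _ e2.
  apply: u2; first exact: fS.
  apply: sc_X11; rewrite hYe -fsc //; exact: sc_1YY (r1 _ hY).
have fne : forall X, X \in S1 -> (f X != [set 1]) = (X != [set 1]).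
  move=> X hX; apply/idP/idP; apply: contra => /eqP E.
    by rewrite E f1.
  by apply/eqP; apply: finj => //; rewrite E f1.
split; split.
- case=> X hX [hne hc]; exists (f X); first exact: fS.
  by rewrite fne // -f1 -fsc.
- case=> Y hY [hne hc]; have [X hX E] := fsurj _ hY; subst Y; exists X => //.
  by rewrite -fne // (fsc _ _ _ hX hX e1) f1.
- move=> h Y hY; have [X hX E] := fsurj _ hY; subst Y.
  by rewrite -f1 -fsc //; apply: h.
- move=> h X hX; rewrite (fsc _ _ _ hX hX e1) f1; apply: h; exact: fS.
Qed.
Lemma aut1 (P : finGroupType) (a : {perm P}) : a \in Aut [set: P] -> a 1 = 1.
Proof. by move=> h; rewrite -(autmE h) morph1. Qed.

Lemma autM (P : finGroupType) (a : {perm P}) x y : a \in Aut [set: P] -> a (x * y) = a x * a y.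
Proof. by move=> h; rewrite -(autmE h) morphM ?inE. Qed.

Lemma autV (P : finGroupType) (a : {perm P}) x : a \in Aut [set: P] -> a (x^-1) = (a x)^-1.
Proof. by move=> h; rewrite -(autmE h) morphV ?inE. Qed.

Lemma autX (P : finGroupType) (a : {perm P}) x n : a \in Aut [set: P] -> a (x ^+ n) = (a x) ^+ n.
Proof. by move=> h; rewrite -(autmE h) morphX ?inE. Qed.

Section Orb.
Variables (E P : finGroupType) (sigma : {perm E}) (K M : {group {perm P}}) (theta : {perm P}).
Hypothesis hK : K :=: <[theta]>.
Hypothesis hM : M :=: <[theta ^+ #[sigma]]>.

Lemma A_mem xy : xy \in Agrp sigma K theta M <-> exists n, xy = (sigma ^+ n, theta ^+ n).
Proof.
split.
- rewrite inE => /existsP [k /and3P [/eqP h1 h2 h3]].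
  move: h3; rewrite mem_rcoset hM => /cycleP [t ht].
  exists (#[sigma] * t + k)%N; case: xy h1 h2 ht => x y /= -> _ ht.
  congr (_, _); first by rewrite expgD expgM expg_order expg1n mul1g.
  by rewrite expgD expgM -ht mulgKV.
- case=> n ->; rewrite inE; apply/existsP.
  exists (Ordinal (ltn_pmod n (order_gt0 sigma))) => /=.
  rewrite expg_mod_order eqxx /= hK mem_cycle /= mem_rcoset hM.
  rewrite {1}(divn_eq n #[sigma]) expgD mulgK mulnC expgM; exact: mem_cycle.
Qed.

Definition orb (g : (E * P)%type) : {set (E * P)%type} :=
  [set ((xy.1 g.1, xy.2 g.2) : (E * P)%type) | xy : {perm E} * {perm P} in Agrp sigma K theta M].

Lemma orb_mem u g : u \in orb g <-> exists n, u = ((sigma ^+ n) g.1, (theta ^+ n) g.2).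
Proof.
split.
- by case/imsetP => xy /A_mem [n ->] ->; exists n.
- case=> n ->; apply/imsetP; exists (sigma ^+ n, theta ^+ n) => //; apply/A_mem; by exists n.
Qed.

Lemma cyc_mem X : X \in cyc_sets (Agrp sigma K theta M) <-> exists g, X = orb g.
Proof.
split; first by case/imsetP => g _ ->; exists g.
by case=> g ->; apply/imsetP; exists g.
Qed.

Lemma orb_self g : g \in orb g.
Proof. apply/orb_mem; exists 0%N; case: g => a b; by rewrite !expg0 !perm1. Qed.

Hypothesis s1 : sigma 1 = 1.
Hypothesis thA : theta \in Aut [set: P].

Lemma thnA n : theta ^+ n \in Aut [set: P].
Proof. exact: groupX. Qed.

Lemma sgn1 n : (sigma ^+ n) 1 = 1.
Proof. rewrite permX; elim: n => //= n ->; exact: s1. Qed.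

Lemma orb1 : orb 1 = [set 1].
Proof.
apply/setP => u; rewrite inE; apply/idP/idP.
- by case/orb_mem => n ->; rewrite /= sgn1 aut1 ?thnA.
- by move/eqP ->; apply: orb_self.
Qed.

Lemma good_cyc : good (cyc_sets (Agrp sigma K theta M)).
Proof.
split.
- apply/cyc_mem; exists 1; by rewrite orb1.
- move=> X /cyc_mem [g ->]; apply: mem_repr; exact: orb_self.
- move=> X /cyc_mem [g ->] /orb_mem [n [h1 h2]].
  have g1 : g.1 = 1 by apply: (perm_inj (s := sigma ^+ n)); rewrite -h1 sgn1.
  have g2 : g.2 = 1 by apply: (perm_inj (s := theta ^+ n)); rewrite -h2 aut1 ?thnA.
  by case: g g1 g2 {h1 h2} => a b /= -> ->; rewrite -orb1.
Qed.


Local Notation S := (cyc_sets (Agrp sigma K theta M)).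

Lemma L_thin (t : E) : sigma t = t -> t * t = 1 -> t != 1 -> thin S.
Proof.
move=> st tt tn1.
have Xe : orb (t, 1) = [set (t, 1)].
  apply/setP => u; rewrite inE; apply/idP/idP.
  - case/orb_mem => n ->; rewrite /= aut1 ?thnA //.
    suff -> : (sigma ^+ n) t = t by [].
    by rewrite permX; elim: n => //= n ->.
  - move/eqP ->; exact: orb_self.
exists [set (t, 1)]; first by apply/cyc_mem; exists (t, 1); rewrite Xe.
split.
- apply/negP => /eqP E0; have : ((t, 1) : (E * P)%type) \in [set (t, 1)] by apply/set1P.
  rewrite E0 inE => /eqP [] /eqP; by rewrite (negbTE tn1).
- rewrite /struct_const repr_set1.
  pose g0 : (E * P)%type := (t, 1).
  have -> : [set u in setX [set g0] [set g0] | u.1 * u.2 == 1] = [set (g0, g0)].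
    apply/setP => [[u v]]; rewrite !inE /=.
    apply/idP/idP.
    + by case/andP => /andP [/eqP -> /eqP ->].
    + move/eqP => [-> ->]; rewrite !eqxx /=.
      by rewrite /g0; apply/eqP; rewrite /mulg /=; congr (_, _) => //; exact: mulg1.
  exact: cards1.
Qed.

Lemma L_allsym : (forall g : (E * P)%type, exists n, ((sigma ^+ n) g.1, (theta ^+ n) g.2) = g^-1) -> allsym S.
Proof.
move=> h X /cyc_mem [g ->]; rewrite /struct_const cards_eq0; apply/set0Pn.
have [n hn] := h g.
exists (g, g^-1); rewrite inE in_setX orb_self /= repr_set1 mulgV eqxx andbT /=.
by apply/orb_mem; exists n.
Qed.

Lemma L_notallsym (g : (E * P)%type) :
  (forall n m, ((sigma ^+ n) g.1 * (sigma ^+ m) g.1, (theta ^+ n) g.2 * (theta ^+ m) g.2) != 1) ->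
  ~ allsym S.
Proof.
move=> h hs; have := hs (orb g); rewrite /struct_const cards_eq0.
have -> : orb g \in S by apply/cyc_mem; exists g.
move/(_ isT) => /set0Pn [[u v]]; rewrite inE in_setX repr_set1 /=.
case/andP => /andP [/orb_mem [n ->] /orb_mem [m ->]].
by move: (h n m) => /negbTE ->.
Qed.

Lemma L_notthin : (forall x y, sigma (x * y) = sigma x * sigma y) ->
  (forall x, sigma x = x -> x = 1) -> (forall q, theta q = q -> q = 1) -> ~ thin S.
Proof.
move=> sM sfix tfix [X /cyc_mem [g ->] [hne hc]].
move: hc; rewrite /struct_const repr_set1 => /eqP /cards1P [[u v] hset].
have : (u, v) \in [set (u, v)] by rewrite inE.
rewrite -hset inE in_setX /= => /andP [/andP [/orb_mem [n hu] /orb_mem [m hv]] /eqP huv].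
set u' := ((sigma ^+ n.+1) g.1, (theta ^+ n.+1) g.2).
set v' := ((sigma ^+ m.+1) g.1, (theta ^+ m.+1) g.2).
have hu' : u' = (sigma u.1, theta u.2) by rewrite hu /u' !expgSr !permM.
have hv' : v' = (sigma v.1, theta v.2) by rewrite hv /v' !expgSr !permM.
have : (u', v') \in [set (u, v)].
  rewrite -hset inE in_setX /=; apply/andP; split.
    by apply/andP; split; apply/orb_mem; [exists n.+1 | exists m.+1].
  rewrite hu' hv'; apply/eqP.
  have [h1 h2] : u.1 * v.1 = 1 /\ u.2 * v.2 = 1 by move: huv => /= [].
  rewrite /mulg /=; congr (_, _).
    by rewrite -sM; move: h1; rewrite /mulg /= => ->; apply: s1.
  by rewrite -autM // ; move: h2; rewrite /mulg /= => ->; apply: aut1.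
rewrite inE => /eqP [] hu1 _.
have u1 : u = 1.
  have a : sigma u.1 = u.1 by have := congr1 fst hu1; rewrite hu'.
  have b : theta u.2 = u.2 by have := congr1 snd hu1; rewrite hu'.
  move: (sfix _ a) (tfix _ b); clear; case: u => a b /= -> ->; done.
case: good_cyc => _ _ h3.
apply: (negP hne); apply/eqP; apply: h3; first by apply/cyc_mem; exists g.
rewrite -u1 hu; apply/orb_mem; by exists n.
Qed.

End Orb.

Section Zp.
Variable p : nat.
Hypothesis p_prime : prime p.
Hypothesis p_ge3 : 3 <= p.

Lemma cardZp : #|[set: 'Z_p]| = p.
Proof. by rewrite cardsT card_ord Zp_cast // prime_gt1. Qed.

Lemma Zp_gen (q : 'Z_p) : q != 1 -> <[q]> = [set: 'Z_p].
Proof.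
move=> hq; apply/eqP; rewrite eqEcard subsetT cardZp -orderE.
have := order_dvdG (in_setT q); rewrite cardZp.
case/primeP: p_prime => _ hp.
move/hp; rewrite -order_gt1 in hq; case/orP => /eqP E; first by rewrite E in hq.
by rewrite E leqnn.
Qed.

Lemma aut_eq_at (a b : {perm 'Z_p}) (q : 'Z_p) :
  a \in Aut [set: 'Z_p] -> b \in Aut [set: 'Z_p] -> q != 1 -> a q = b q -> a = b.
Proof.
move=> ha hb hq hab; apply: (eq_Aut ha hb) => x _.
have : x \in <[q]> by rewrite Zp_gen.
by case/cycleP => k ->; rewrite !autX // hab.
Qed.

Definition invP : {perm 'Z_p} := perm (@invg_inj 'Z_p).

Lemma invPE x : invP x = x^-1.
Proof. by rewrite permE. Qed.

Lemma invP_Aut : invP \in Aut [set: 'Z_p].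
Proof.
rewrite inE; apply/andP; split; first by apply/subsetP => x; rewrite inE.
apply/morphicP => x y _ _; by rewrite !invPE invMg Zp_mulgC.
Qed.

Lemma Zp1_inv : (Zp1 : 'Z_p)^-1 != Zp1.
Proof.
apply/negP => /eqP h.
have : #[(Zp1 : 'Z_p)] %| 2 by rewrite order_dvdn expgS expg1 -{1}h mulVg.
rewrite order_Zp1 Zp_cast ?prime_gt1 // => /dvdn_leq h2; by have := h2 isT; rewrite leqNgt p_ge3.
Qed.

Lemma order_invP : #[invP] = 2.
Proof.
have h2 : #[invP] %| 2.
  by rewrite order_dvdn; apply/eqP/permP => x; rewrite perm1 permX /= !invPE invgK.
have : invP != 1.
  apply/eqP => h; move: Zp1_inv; by rewrite -invPE h perm1 eqxx.
rewrite -order_gt1; move: h2; case: #[invP] => [|[|[|k]]] //.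
Qed.

Lemma nu_inv (nu : {perm 'Z_p}) : nu \in Aut [set: 'Z_p] -> #[nu] = 2 -> forall x, nu x = x^-1.
Proof.
move=> hnu o2 x.
have cyc : cyclic (Aut [set: 'Z_p]) by apply: Aut_prime_cyclic; rewrite cardZp.
have E : <[nu]> == <[invP]> :> {set _}.
  rewrite (eq_subG_cyclic (G := Aut_group [set: 'Z_p]%G) cyc) ?cycle_subG //; last exact: invP_Aut.
  by rewrite -!orderE o2 order_invP.
have : nu \in <[invP]> by rewrite -(eqP E) cycle_id.
rewrite cycle2g ?order_invP // !inE => /orP [/eqP h|/eqP ->]; last exact: invPE.
by move: o2; rewrite h order1.
Qed.

End Zp.

Lemma ord_prime (gT : finGroupType) (x : gT) n : prime n -> x ^+ n = 1 -> x != 1 -> #[x] = n.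
Proof.
move=> pn xn x1; have : #[x] %| n by rewrite order_dvdn xn.
case/primeP: pn => _ hp /hp /orP [/eqP h|/eqP //].
by move: x1; rewrite -order_gt1 h.
Qed.

Lemma invol_iter (T : finType) (s : {perm T}) x n :
  (forall y, s (s y) = y) -> (s ^+ n) x = if odd n then s x else x.
Proof.
move=> hs; rewrite permX; elim: n => //= n ->.
by case: (odd n) => //=; rewrite hs.
Qed.

Lemma sigma1E x : sigma1 x = sig1_fun x. Proof. by rewrite permE. Qed.
Lemma sigma2E x : sigma2 x = sig2_fun x. Proof. by rewrite permE. Qed.
Lemma sigma3E x : sigma3 x = x^-1. Proof. by rewrite permE. Qed.

Ltac e1 x := case: x => [[[|[|?]] ?] [[|[|?]] ?]] //.
Ltac e2 x := case: x => [[|[|[|[|?]]]] ?] //.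

Lemma sig1_1 : sigma1 1 = 1. Proof. by rewrite sigma1E; apply/eqP. Qed.
Lemma sig1_M x y : sigma1 (x * y) = sigma1 x * sigma1 y.
Proof. rewrite !sigma1E; apply/eqP; e1 x; e1 y. Qed.
Lemma sig1_fix x : sigma1 x = x -> x = 1.
Proof. rewrite sigma1E => /eqP h; apply/eqP; move: h; e1 x. Qed.
Lemma ord_sigma1 : #[sigma1] = 3.
Proof.
apply: ord_prime => //.
  apply/permP => x; rewrite perm1 permX /= !sigma1E; apply/eqP; e1 x.
apply/eqP => /permP /(_ (Zp1, 1)); rewrite perm1 sigma1E => /eqP; by [].
Qed.

Lemma sig2_1 : sigma2 1 = 1. Proof. by rewrite sigma2E; apply/eqP. Qed.
Lemma sig2_inv x : sigma2 (sigma2 x) = x. Proof. rewrite !sigma2E; apply/eqP; e1 x. Qed.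
Lemma ord_sigma2 : #[sigma2] = 2.
Proof.
apply: ord_prime => //.
  by apply/permP => x; rewrite perm1 expgS expg1 permM sig2_inv.
apply/eqP => /permP /(_ (Zp1, 1)); rewrite perm1 sigma2E => /eqP; by [].
Qed.

Lemma sig3_1 : sigma3 1 = 1. Proof. by rewrite sigma3E invg1. Qed.
Lemma sig3_inv x : sigma3 (sigma3 x) = x. Proof. by rewrite !sigma3E invgK. Qed.
Lemma ord_sigma3 : #[sigma3] = 2.
Proof.
apply: ord_prime => //.
  by apply/permP => x; rewrite perm1 expgS expg1 permM sig3_inv.
apply/eqP => /permP /(_ Zp1); rewrite perm1 sigma3E => /eqP; by [].
Qed.

Lemma pairE1 (A B : finGroupType) (u : A) (v : B) : ((u, v) : (A * B)%type) = 1 -> u = 1 /\ v = 1.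
Proof. move=> e; split; [exact: (congr1 fst e) | exact: (congr1 snd e)]. Qed.

Section Main.
Variable p : nat.
Hypothesis p_prime : prime p.
Hypothesis p_ge3 : 3 <= p.
Variables (K : {group {perm 'Z_p}}) (theta : {perm 'Z_p}).
Hypothesis K_aut : K \subset Aut [set: 'Z_p].
Hypothesis theta_gen : generator K theta.

Lemma hK : K :=: <[theta]>.
Proof. exact: (eqP theta_gen). Qed.

Lemma thA : theta \in Aut [set: 'Z_p].
Proof. by apply: (subsetP K_aut); rewrite hK cycle_id. Qed.

Lemma ordK : #[theta] = #|K|.
Proof. by rewrite orderE hK. Qed.

Lemma Mdesc (s : nat) (M : {group {perm 'Z_p}}) :
  s %| #|K| -> M \subset K -> #|K : M| = s -> M :=: <[theta ^+ s]>.
Proof.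
move=> hs sMK idx; apply/eqP.
have cK : cyclic K by rewrite hK cycle_cyclic.
have sub : <[theta ^+ s]>%G \subset K by rewrite cycle_subG hK mem_cycle.
rewrite (eq_subG_cyclic cK sMK sub) /= -orderE orderXdiv ordK //.
have s0 : 0 < s by rewrite -idx indexg_gt0.
by rewrite -(Lagrange sMK) idx mulnK.
Qed.

Lemma Zp1n1 : (Zp1 : 'Z_p) != 1.
Proof. by rewrite -order_gt1 order_Zp1. Qed.

Lemma par (N h n m : nat) : 2 %| N -> m = n + h %[mod N] -> odd m = odd (n + h).
Proof.
move=> d2 E.
have : (odd m : nat) = odd (n + h) by rewrite -!modn2 -(modn_dvdm m d2) -(modn_dvdm (n + h) d2) E.
by case: (odd m); case: (odd (n + h)).
Qed.

Let h := #[theta] %/ 2.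

Lemma h_spec : 2 %| #|K| -> #[theta] = (h * 2)%N /\ 0 < h.
Proof.
rewrite -ordK => /dvdnP [k hk]; rewrite /h hk mulnK //; split => //.
by have := order_gt0 theta; rewrite hk muln_gt0 => /andP [].
Qed.

Lemma nu_facts : 2 %| #|K| -> forall x, (theta ^+ h) x = x^-1.
Proof.
move=> d2; apply: nu_inv => //; first exact: groupX thA.
have [hk h0] := h_spec d2.
by rewrite orderXdiv hk ?dvdn_mulr // mulKn.
Qed.

Lemma theta_par n m : 2 %| #|K| -> (theta ^+ n) Zp1 * (theta ^+ m) Zp1 = 1 -> odd m = odd (n + h).
Proof.
move=> d2 /eqP; rewrite -eq_invg_mul => /eqP e.
have e2 : (theta ^+ m) Zp1 = (theta ^+ (n + h)) Zp1 by rewrite expgD permM nu_facts.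
have := aut_eq_at p_prime (groupX m thA) (groupX (n + h) thA) Zp1n1 e2.
move/eqP; rewrite eq_expg_mod_order => /eqP; apply: par.
by rewrite ordK.
Qed.

Lemma tfix_of : 1 < #|K| -> forall q : 'Z_p, theta q = q -> q = 1.
Proof.
move=> K1 q tq; apply/eqP; apply: contraTT K1 => hq.
have := aut_eq_at p_prime thA (group1 _) hq; rewrite perm1 => /(_ tq) t1.
by rewrite -ordK t1 order1.
Qed.


Lemma S1_facts (M : {group {perm 'Z_p}}) : 3 %| #|K| -> M \subset K -> #|K : M| = 3 ->
  good (cyc_sets (Agrp sigma1 K theta M)) /\ ~ thin (cyc_sets (Agrp sigma1 K theta M)).
Proof.
move=> d3 sMK idx.
have hM : M :=: <[theta ^+ #[sigma1]]> by rewrite ord_sigma1; apply: Mdesc.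
split; first exact: (good_cyc hK hM sig1_1 thA).
apply: (L_notthin hK hM sig1_1 thA sig1_M sig1_fix).
apply: tfix_of; apply: leq_trans (dvdn_leq _ d3) => //.
Qed.

Lemma S2_facts (M : {group {perm 'Z_p}}) : 2 %| #|K| -> M \subset K -> #|K : M| = 2 ->
  [/\ good (cyc_sets (Agrp sigma2 K theta M)), thin (cyc_sets (Agrp sigma2 K theta M))
     & allsym (cyc_sets (Agrp sigma2 K theta M)) <-> ~~ odd h].
Proof.
move=> d2 sMK idx.
have hM : M :=: <[theta ^+ #[sigma2]]> by rewrite ord_sigma2; apply: Mdesc.
split; first exact: (good_cyc hK hM sig2_1 thA).
  by apply: (L_thin hK hM thA (t := (Zp1, Zp1))); rewrite ?sigma2E; apply/eqP.
split.
- apply: contraPN => oh; apply: (L_notallsym hK hM (g := ((Zp1, 1), Zp1))) => n m.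
  apply/negP => /eqP /pairE1 [e1 e2].
  have := theta_par d2 e2; rewrite oddD oh.
  move: e1; rewrite !(invol_iter _ _ sig2_inv) !sigma2E.
  by case: (odd n); case: (odd m) => //= /eqP.
- move=> oh; apply: (L_allsym hK hM) => -[x y]; exists h.
  rewrite (invol_iter _ _ sig2_inv) (negbTE oh) nu_facts //=.
  by congr (_, _); apply/eqP; e1 x.
Qed.

Lemma S3_facts (M : {group {perm 'Z_p}}) : 2 %| #|K| -> M \subset K -> #|K : M| = 2 ->
  [/\ good (cyc_sets (Agrp sigma3 K theta M)), thin (cyc_sets (Agrp sigma3 K theta M))
     & allsym (cyc_sets (Agrp sigma3 K theta M)) <-> odd h].
Proof.
move=> d2 sMK idx.
have hM : M :=: <[theta ^+ #[sigma3]]> by rewrite ord_sigma3; apply: Mdesc.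
split; first exact: (good_cyc hK hM sig3_1 thA).
  by apply: (L_thin hK hM thA (t := (Zp1 * Zp1 : E2))); rewrite ?sigma3E; apply/eqP.
split.
- apply: contraPT => oh; apply: (L_notallsym hK hM (g := ((Zp1 : E2), Zp1))) => n m.
  apply/negP => /eqP /pairE1 [e1 e2].
  have := theta_par d2 e2; rewrite oddD (negbTE oh) addbF.
  move: e1; rewrite !(invol_iter _ _ sig3_inv) !sigma3E.
  by case: (odd n); case: (odd m) => //= /eqP.
- move=> oh; apply: (L_allsym hK hM) => -[x y]; exists h.
  by rewrite (invol_iter _ _ sig3_inv) oh nu_facts //= sigma3E.
Qed.

End Main.

Local Close Scope group_scope.

Theorem lemma3p5 (p : nat) (p_prime : prime p) (p_ge3 : 3 <= p)
    (K : {group {perm 'Z_p}}) (K_aut : K \subset Aut [set: 'Z_p])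
    (theta : {perm 'Z_p}) (theta_gen : generator K theta)
    (i j : nat) (hi : i \in [:: 1; 2; 3]) (hj : j \in [:: 1; 2; 3]) (hij : i != j)
    (hdi : sigma_order i %| #|K|) (hdj : sigma_order j %| #|K|)
    (Mi Mj : {group {perm 'Z_p}})
    (hMi : Mi \subset K) (hMi_idx : #|K : Mi|%g = sigma_order i)
    (hMj : Mj \subset K) (hMj_idx : #|K : Mj|%g = sigma_order j) :
  ~ alg_iso_sr (calA i K theta Mi) (calA j K theta Mj).
Proof.
move=> iso.
have F1 := fun (M : {group {perm 'Z_p}}) (d : sigma_order 1 %| #|K|) (sMK : M \subset K) (idx : #|K : M|%g = sigma_order 1) =>
  S1_facts p_prime K_aut theta_gen (M := M)
    (eq_ind _ (fun s => s %| #|K|) d _ ord_sigma1) sMK (etrans idx ord_sigma1).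
have F2 := fun (M : {group {perm 'Z_p}}) (d : sigma_order 2 %| #|K|) (sMK : M \subset K) (idx : #|K : M|%g = sigma_order 2) =>
  S2_facts p_prime p_ge3 K_aut theta_gen (M := M)
    (eq_ind _ (fun s => s %| #|K|) d _ ord_sigma2) sMK (etrans idx ord_sigma2).
have F3 := fun (M : {group {perm 'Z_p}}) (d : sigma_order 3 %| #|K|) (sMK : M \subset K) (idx : #|K : M|%g = sigma_order 3) =>
  S3_facts p_prime p_ge3 K_aut theta_gen (M := M)
    (eq_ind _ (fun s => s %| #|K|) d _ ord_sigma3) sMK (etrans idx ord_sigma3).
move: hi hj hij hdi hdj hMi_idx hMj_idx iso; rewrite !inE.
case/or3P => /eqP -> /or3P [] /eqP -> //= _ di dj ii ij iso.
- have [g1 nt1] := F1 _ di hMi ii; have [g2 t2 _] := F2 _ dj hMj ij.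
  by have [[_ T] _] := transfer g1 g2 iso; apply: nt1; apply: T.
- have [g1 nt1] := F1 _ di hMi ii; have [g2 t2 _] := F3 _ dj hMj ij.
  by have [[_ T] _] := transfer g1 g2 iso; apply: nt1; apply: T.
- have [g1 nt1] := F1 _ dj hMj ij; have [g2 t2 _] := F2 _ di hMi ii.
  by have [[T _] _] := transfer g2 g1 iso; apply: nt1; apply: T.
- have [g1 t1 a1] := F2 _ di hMi ii; have [g2 t2 a2] := F3 _ dj hMj ij.
  have [_ [A B]] := transfer g1 g2 iso.
  case: (boolP (odd _)) a1 a2 => o [a1 a1'] [a2 a2'].
  + by move: (a1 (B (a2' isT))).
  + by move: (a2 (A (a1' isT))).
- have [g1 nt1] := F1 _ dj hMj ij; have [g2 t2 _] := F3 _ di hMi ii.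
  by have [[T _] _] := transfer g2 g1 iso; apply: nt1; apply: T.
- have [g1 t1 a1] := F3 _ di hMi ii; have [g2 t2 a2] := F2 _ dj hMj ij.
  have [_ [A B]] := transfer g1 g2 iso.
  case: (boolP (odd _)) a1 a2 => o [a1 a1'] [a2 a2'].
  + by move: (a2 (A (a1' isT))).
  + by move: (a1 (B (a2' isT))).
Qed.
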